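(* For every graph $G=(V,E)$, $$\mathcal{T}(G)=\{x\in\mathbb{R}^V : \exists y\in\mathbb{R}^E \text{ such that } y(\delta(v))\le x_v\ \forall v\in V,\ y_e\ge 0\ \forall e\in E,\ x_u+x_v-y_{uv}\le 1\ \forall uv\in E\}.$$
   Context: $\delta(v)$ is the set of edges incident to $v$, $N(w)$ the neighborhood of $w$, $x(A)=\sum_{a\in A}x_a$. $\mathcal{T}(G)$ is the polytope of $x\in\mathbb{R}^V$ satisfying $0\le x\le 1$ and the star inequalities $x(W)+(|W|-1)x_w\le|W|$ for all $w\in V$ and $W\subseteq N(w)$. *)

(* Defs.v *)
From HB Require Import structures.
From mathcomp Require Import all_boot all_order all_algebra.
From mathcomp Require Import reals.
Set Implicit Arguments. Unset Strict Implicit. Unset Printing Implicit Defensive.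
Import Order.TTheory GRing.Theory Num.Theory.
Local Open Scope ring_scope.

(* A finite simple graph G = (V, E) is given by a finite vertex type V and a
   symmetric irreflexive adjacency relation [adj]. *)
Section Graph.
Variable V : finType.
Variable adj : rel V.

Definition edgeset : {set {set V}} :=
  [set A : {set V} | [exists u, exists v, adj u v && (A == [set u; v])]].

Definition delta (v : V) : {set {set V}} := [set A in edgeset | v \in A].

Definition nbhd (w : V) : {set V} := [set u | adj w u].

Variable R : realType.

Definition in_T (x : V -> R) : Prop :=
  (forall v, 0 <= x v <= 1) /\
  (forall (w : V) (W : {set V}), W \subset nbhd w ->
     \sum_(u in W) x u + (#|W|%:R - 1) * x w <= #|W|%:R).

(* x is in the projection of the extended formulation; y ranges over R^E
   (represented as a function on 2-sets, only its values on edges matter). *)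
Definition in_ext (x : V -> R) : Prop :=
  (forall v, x v <= 1) /\
  exists y : {set V} -> R,
    (forall v, \sum_(A in delta v) y A <= x v) /\
    (forall A, A \in edgeset -> 0 <= y A) /\
    (forall u v, adj u v -> x u + x v - y [set u; v] <= 1).
End Graph.

(* Main.v *)
Require Import Defs.
From HB Require Import structures.
From mathcomp Require Import all_boot all_order all_algebra.
From mathcomp Require Import reals.
From mathcomp Require Import lra.
Import Order.TTheory GRing.Theory Num.Theory.
Local Open Scope ring_scope.

Lemma delta_imset (V : finType) (adj : rel V) (adj_sym : symmetric adj) (v : V) :
  delta adj v = [set [set v; u] | u in nbhd adj v].
Proof.
apply/setP => A; rewrite !inE; apply/idP/idP.
- case/andP => /existsP [a /existsP [b /andP [hab /eqP ->]]].
  rewrite !inE => /orP [] /eqP E; subst v.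
    by apply/imsetP; exists b; rewrite ?inE.
  by apply/imsetP; exists a; rewrite ?inE 1?adj_sym // setUC.
- case/imsetP => u; rewrite inE => hu ->.
  rewrite !inE eqxx andbT; apply/existsP; exists v; apply/existsP; exists u.
  by rewrite hu eqxx.
Qed.

Lemma inj_pair (V : finType) (adj : rel V) (adj_irr : irreflexive adj) (v : V) :
  {in nbhd adj v &, injective (fun u => [set v; u])}.
Proof.
move=> u1 u2; rewrite !inE => h1 h2 e.
have : u1 \in [set v; u2] by rewrite -e !inE eqxx orbT.
rewrite !inE => /orP [/eqP E|/eqP //]. by rewrite E adj_irr in h1.
Qed.

Lemma sum_pair (V : finType) (R : realType) (x : V -> R) (u v : V) : u != v ->
  \sum_(w in [set u; v]) x w = x u + x v.
Proof.
by move=> huv; rewrite big_setU1 ?big_set1 // inE.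
Qed.

Theorem mainTheorem9 (V : finType) (adj : rel V) (R : realType)
  (adj_sym : symmetric adj) (adj_irr : irreflexive adj) (x : V -> R) :
  in_T adj x <-> in_ext adj x.
Proof.
have sumd : forall (F : {set V} -> R) v,
    \sum_(A in delta adj v) F A = \sum_(u in nbhd adj v) F [set v; u].
  by move=> F v; rewrite delta_imset // big_imset //; apply: inj_pair.
have neq : forall v u, u \in nbhd adj v -> v != u.
  by move=> v u; rewrite inE; apply: contraTneq => ->; rewrite adj_irr.
split.
- case=> hb hs; split; first by move=> v; case/andP: (hb v).
  exists (fun A : {set V} => Num.max (0:R) (\sum_(w in A) x w - 1)); split; last split.
  + move=> v; rewrite sumd.
    set W := [set u in nbhd adj v | 0 < x v + x u - 1].
    have hW : W \subset nbhd adj v by apply/subsetP => u; rewrite inE => /andP [].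
    have hsW := hs v W hW.
    rewrite (bigID (fun u => 0 < x v + x u - 1)) /=.
    rewrite [X in _ + X]big1; last first.
      move=> u /andP [hu hn]; rewrite sum_pair ?neq //.
      by apply/max_idPl; rewrite leNgt.
    rewrite addr0.
    rewrite (eq_bigr (fun u => x v + x u - 1)); last first.
      by move=> u /andP [hu hp]; rewrite sum_pair ?neq //; apply/max_idPr/ltW.
    rewrite (eq_bigl (fun u => u \in W)); last by move=> u; rewrite /W inE.
    rewrite big_split /= big_split /= sumrN !sumr_const.
    rewrite -[x v *+ _]mulr_natr -[1 *+ _]mulr_natr mul1r.
    lra.
  + by move=> A _; rewrite le_max lexx.
  + move=> u v huv; rewrite sum_pair; last by apply: (neq u v); rewrite inE.
    have : x u + x v - 1 <= Num.max 0 (x u + x v - 1) by rewrite le_max lexx orbT.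
    lra.
- case=> hb [y [hd [hy he]]].
  have hx0 : forall v, 0 <= x v.
    move=> v; apply: le_trans (hd v); apply: sumr_ge0 => A.
    by rewrite inE => /andP [hA _]; apply: hy.
  split; first by move=> v; rewrite hx0 hb.
  move=> w W hW.
  have hyW : \sum_(u in W) y [set w; u] <= x w.
    apply: le_trans (hd w); rewrite sumd.
    rewrite [X in _ <= X](bigID (fun u => u \in W)) /=.
    rewrite [X in _ <= X + _](eq_bigl (fun u => u \in W)); last first.
      move=> u; apply/idP/idP; first by case/andP.
      by move=> hu; rewrite hu andbT (subsetP hW).
    rewrite lerDl; apply: sumr_ge0 => u /andP [hu _]; apply: hy.
    rewrite inE; apply/existsP; exists w; apply/existsP; exists u.
    by move: hu; rewrite inE => ->; rewrite eqxx.
  have hle : \sum_(u in W) x u <= \sum_(u in W) (1 - x w + y [set w; u]).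
    apply: ler_sum => u hu; have := he w u.
    have : adj w u by move: (subsetP hW u hu); rewrite inE.
    move=> h /(_ h); lra.
  move: hle; rewrite big_split /= big_split /= sumrN !sumr_const.
  rewrite -[x w *+ _]mulr_natr -[1 *+ _]mulr_natr mul1r.
  move: hyW; clear.
  move: (\sum_(u in W) x u) (\sum_(u in W) y [set w; u]) (#|W|%:R : R) (x w) => a b n c.
  rewrite mulrBl mul1r [c * n]mulrC; lra.
Qed.
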